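(* Let $n \ge 1$ and $N = 2^n$. Let $B_0(N) = \pi_N^{-1}\left(\left\{\begin{pmatrix} * & * \\ 0 & * \end{pmatrix}\right\}\right) \subseteq \mathrm{GL}_2(\hat{\mathbb{Z}})$ be the Borel subgroup of level $N$ and $C_{ns}(N)$ the nonsplit Cartan subgroup of level $N$. Then $B_0(N)$ and $C_{ns}(N)$ are independent in $\mathrm{GL}_2(\hat{\mathbb{Z}})$, i.e. $[\mathrm{GL}_2(\hat{\mathbb{Z}}):B_0(N)\cap C_{ns}(N)] = [\mathrm{GL}_2(\hat{\mathbb{Z}}):B_0(N)]\,[\mathrm{GL}_2(\hat{\mathbb{Z}}):C_{ns}(N)]$; but for $n>1$ they are not geometrically independent, i.e. for $n > 1$, $[\mathrm{SL}_2(\hat{\mathbb{Z}}):B_0(N)\cap C_{ns}(N)\cap\mathrm{SL}_2(\hat{\mathbb{Z}})] \neq [\mathrm{SL}_2(\hat{\mathbb{Z}}):B_0(N)\cap\mathrm{SL}_2(\hat{\mathbb{Z}})]\,[\mathrm{SL}_2(\hat{\mathbb{Z}}):C_{ns}(N)\cap\mathrm{SL}_2(\hat{\mathbb{Z}})]$.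
   Context: $\hat{\mathbb{Z}} = \varprojlim_N \mathbb{Z}/N\mathbb{Z}$ and $\pi_N:\mathrm{GL}_2(\hat{\mathbb{Z}})\to \mathrm{GL}_2(\mathbb{Z}/N\mathbb{Z})$ is reduction. Nonsplit Cartan subgroup: let $R$ be an imaginary quadratic order in which every prime dividing $N$ (here, $2$) is inert, with an optimal embedding $\iota: R \to M_2(\mathbb{Z})$ and its reduction $\iota_N: R \to M_2(\mathbb{Z}/N\mathbb{Z})$; then $C_{ns}(N) = \pi_N^{-1}(\iota_N(R)^* )$, which is well defined up to conjugation in $\mathrm{GL}_2(\hat{\mathbb{Z}})$. *)

(* Defs.v *)
From mathcomp Require Import all_boot all_order all_algebra.


Import GRing.Theory Num.Theory.
Local Open Scope ring_scope.

(* Z/NZ for N >= 2 is 'Z_N.  Levels are indexed by n with N = n.+2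
   (level 1 is trivial and can be omitted from the inverse limit). *)

Definition zred (m n : nat) (x : 'Z_n) : 'Z_m := (nat_of_ord x)%:R.

(* GL_2(Zhat) = lim_N GL_2(Z/NZ): compatible families of invertible
   2x2 matrices over Z/NZ, N >= 2, indexed by divisibility. *)
Definition GL2hat : Type :=
  { g : forall n : nat, 'M['Z_(n.+2)]_2 |
      (forall n, g n \in unitmx) /\
      (forall m n, (m.+2 %| n.+2)%N -> g m = map_mx (zred m.+2 n.+2) (g n)) }.

(* the component of g at level N (meaningful for N >= 2), i.e. pi_N g *)
Definition lvl (g : GL2hat) (N : nat) : 'M['Z_((N.-2).+2)]_2 := sval g N.-2.

Definition in_coset (r h x : GL2hat) : Prop :=
  forall n, sval x n = sval r n *m sval h n.

Definition has_index (G H : GL2hat -> Prop) (k : nat) : Prop :=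
  (forall h, H h -> G h) /\
  exists r : 'I_k -> GL2hat,
    (forall i, G (r i)) /\
    (forall x, G x -> exists! i, exists h, H h /\ in_coset (r i) h x).

Definition GL2 : GL2hat -> Prop := fun _ => True.

Definition SL2 : GL2hat -> Prop := fun g => forall n, \det (sval g n) = 1.

Definition B0 (N : nat) : GL2hat -> Prop := fun g => lvl g N ord_max ord0 = 0.

(* An imaginary quadratic order R = Z[w] with optimal embedding
   iota : R -> M_2(Z) is determined by M = iota(w) in M_2(Z):
   iota(R) = Z + Z M. *)
Definition imag_quadratic_order_emb (M : 'M[int]_2) : Prop :=
  (* R = Z[x]/(x^2 - tr x + det) is an imaginary quadratic order *)
  (\tr M) ^+ 2 - 4 * \det M < 0.

(* optimality: iota(K) ∩ M_2(Z) = iota(R), i.e. (a + bM)/k integral => k | a, b *)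
Definition optimal_emb (M : 'M[int]_2) : Prop :=
  forall a b k : int, k != 0 ->
    (forall i j, (k %| (a%:M + b *: M) i j)%Z) -> (k %| a)%Z /\ (k %| b)%Z.

(* 2 is inert in R = Z[x]/(x^2 - t x + q): R/2R = F_2[x]/(x^2 - t x + q) is a
   field, i.e. the polynomial has no root mod 2. *)
Definition two_inert (M : 'M[int]_2) : Prop :=
  forall x : int, ~~ (2 %| x ^+ 2 - \tr M * x + \det M)%Z.

Definition iotaN (N : nat) (M : 'M[int]_2) (A : 'M['Z_((N.-2).+2)]_2) : Prop :=
  exists a b : 'Z_((N.-2).+2),
    A = a%:M + b *: map_mx (fun z : int => z%:~R) M.

(* nonsplit Cartan of level N: pi_N^{-1}(iota_N(R)^* ); note pi_N g is
   already invertible, and an invertible element of the finite subring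
   iota_N(R) is a unit of it. *)
Definition Cns (N : nat) (M : 'M[int]_2) : GL2hat -> Prop :=
  fun g => iotaN N M (lvl g N).

Definition cap (P Q : GL2hat -> Prop) : GL2hat -> Prop := fun g => P g /\ Q g.

(* Main.v *)
Require Import Defs.
From HB Require Import structures.
From mathcomp Require Import all_boot all_order all_algebra all_fingroup all_solvable.
From mathcomp Require Import ring zify.
Import GRing.Theory Num.Theory.

Lemma totient_leq n : totient n <= n.
Proof.
rewrite totient_count_coprime.
apply: (@leq_trans (\sum_(0 <= d < n) 1)%N).
  by apply: leq_sum => i _; apply: leq_b1.
by rewrite sum_nat_const_nat muln1 subn0.
Qed.

Lemma pow2_mod m a b : 0 < m -> m <= a -> m`! %| b -> 2^(a+b) = 2^a %[mod m].
Proof.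
move=> m0 ma mb.
apply/eqP; rewrite -(partnC 2 m0) chinese_remainder ?coprime_partC //.
apply/andP; split.
  have d : m`_2 %| 2^a.
    rewrite p_part dvdn_exp2l //.
    apply: leq_trans ma; apply: ltnW; apply: leq_trans (ltn_expl _ (isT : 1 < 2)) _.
    by rewrite -p_part dvdn_leq // dvdn_part.
  by rewrite expnD (eqP d) (eqP (dvdn_mulr _ d)).
set m' := m`_(2^').
have cop : coprime 2 m' by apply: (pnat_coprime (pnat_id (isT : prime 2))); apply: part_pnat.
have t0 : 0 < totient m' by rewrite totient_gt0 part_gt0.
have tb : totient m' %| b.
  apply: dvdn_trans mb; apply: dvdn_fact; rewrite t0 /=.
  by rewrite (leq_trans (totient_leq m')) // dvdn_leq // dvdn_part.
case/dvdnP: tb => k ->.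
rewrite expnD -modnMmr [k * _]mulnC expnM.
by rewrite -modnXm (Euler_exp_totient cop) modnXm exp1n modnMmr muln1.
Qed.


Section Idx.
Variable gT : finGroupType.
Local Open Scope group_scope.

Lemma idx_eq (G B C : {group gT}) : B \subset G -> C \subset G -> G \subset B * C ->
  #|lcosets (B :&: C) G| = (#|lcosets B G| * #|lcosets C G|)%N.
Proof.
move=> sB sC sG.
rewrite !card_lcosets.
have LB := Lagrange sB; have LC := Lagrange sC.
have LI := Lagrange (subset_trans (subsetIl B C) sB).
have eBC : #|B * C| = #|G|.
  have eS : (B * C)%g = G by apply/eqP; rewrite eqEsubset mul_subG.
  by rewrite eS.
have m := mul_cardG B C; rewrite eBC in m.
have h1 : (#|B| * #|C| * (#|G : B| * #|G : C|) = #|G| * #|G|)%N.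
  by rewrite mulnACA LB LC.
rewrite m -{2}LI -mulnA in h1.
apply/eqP; rewrite -(eqn_pmul2l (cardG_gt0 G)) -(eqn_pmul2l (cardG_gt0 (B :&: C))).
by apply/eqP; move: h1; rewrite /= => h1; nia.
Qed.

Lemma idx_neq (S B C : {group gT}) (h : gT) : B \subset S -> C \subset S ->
  h \in S -> h \notin C * B ->
  #|lcosets (B :&: C) S| <> (#|lcosets B S| * #|lcosets C S|)%N.
Proof.
move=> sB sC hS hn.
rewrite !card_lcosets.
have LB := Lagrange sB; have LC := Lagrange sC.
have LI := Lagrange (subset_trans (subsetIl B C) sB).
have lt : #|C * B| < #|S|.
  apply: proper_card; apply/properP; split; first by rewrite mul_subG.
  by exists h.
have m := mul_cardG C B; rewrite setIC in m.
move=> E.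
have h1 : (#|B| * #|C| * (#|S : B| * #|S : C|) = #|S| * #|S|)%N.
  by rewrite mulnACA LB LC.
rewrite -E [(#|B| * _)%N]mulnC m in h1.
have pos : (0 < #|B :&: C| * #|S : B :&: C|)%N by rewrite LI cardG_gt0.
have h2 : (#|(C * B)%g| * (#|B :&: C| * #|S : B :&: C|) = #|S| * (#|B :&: C| * #|S : B :&: C|))%N.
  by rewrite mulnA h1 LI.
move/eqP: h2; rewrite eqn_pmul2r // => /eqP h3.
by rewrite h3 ltnn in lt.
Qed.
End Idx.

Local Open Scope ring_scope.

Lemma zredE m n (a : nat) : (m.+2 %| n.+2)%N ->
  zred m.+2 n.+2 (a%:R : 'Z_n.+2) = a%:R.
Proof.
move=> H; rewrite /zred val_Zp_nat // -(Zp_nat_mod (isT : 1 < m.+2)%N).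
by rewrite modn_dvdm // Zp_nat_mod.
Qed.

Lemma zred_nat m n (x : 'Z_n.+2) : zred m.+2 n.+2 x = (x : nat)%:R.
Proof. by []. Qed.

Definition zr m n (H : (m.+2 %| n.+2)%N) : 'Z_n.+2 -> 'Z_m.+2 := zred m.+2 n.+2.
Arguments zr {m n} H _.
Section ZR.
Variables (m n : nat) (H : (m.+2 %| n.+2)%N).
Local Notation zr := (@zr m n H).
Lemma zr_nat a : zr a%:R = a%:R. Proof. exact: zredE. Qed.
Lemma zrE (x : 'Z_n.+2) : zr x = zr (x : nat)%:R.
Proof. by rewrite natr_Zp. Qed.
Lemma zr_add : nmod_morphism zr.
Proof.
split; first exact: (zr_nat 0).
move=> x y; have -> : x + y = ((x:nat) + y)%:R by rewrite natrD !natr_Zp.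
by rewrite zr_nat natrD (zrE x) (zrE y) !zr_nat.
Qed.
HB.instance Definition _ := GRing.isNmodMorphism.Build 'Z_n.+2 'Z_m.+2 zr zr_add.
Lemma zr_mul : monoid_morphism zr.
Proof.
split; first exact: (zr_nat 1).
move=> x y; have -> : x * y = ((x:nat) * y)%:R by rewrite natrM !natr_Zp.
by rewrite zr_nat natrM (zrE x) (zrE y) !zr_nat.
Qed.
HB.instance Definition _ := GRing.isMonoidMorphism.Build 'Z_n.+2 'Z_m.+2 zr zr_mul.
End ZR.

Lemma zrN m n H (x : 'Z_n.+2) : @zr m n H (- x) = - @zr m n H x.
Proof. exact: rmorphN. Qed.

Lemma det2 (R : comRingType) (A : 'M[R]_2) : \det A = A 0 0 * A 1 1 - A 0 1 * A 1 0.
Proof.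
rewrite (expand_det_row _ 0) !big_ord_recl big_ord0 /cofactor !det_mx11 !mxE /=.
rewrite addr0 /bump /=.
rewrite expr0 expr1 mul1r mulN1r mulrN.
by congr (A _ _ * A _ _ - A _ _ * A _ _); apply: val_inj.
Qed.

Lemma unit_idem (R : comUnitRingType) (y d c q : R) k :
  y * y = y -> (1 - y) * c = 0 -> d ^+ k.+1 = q * c + 1 ->
  ((1 - y) * d + y) \is a GRing.unit.
Proof.
move=> yy yc dk.
apply/unitrP; exists ((1 - y) * d ^+ k + y).
have H : ((1 - y) * d ^+ k + y) * ((1 - y) * d + y) =
   (1 - y) * d ^+ k.+1 + y + (y * y - y) * (d ^+ k.+1 - d - d ^+ k + 1).
  by rewrite !exprS; ring.
have H2 : (1 - y) * d ^+ k.+1 + y = 1.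
  rewrite dk mulrDr mulrCA yc mulr0 add0r mulr1; ring.
have E : ((1 - y) * d ^+ k + y) * ((1 - y) * d + y) = 1.
  by rewrite H yy subrr mul0r addr0 H2.
by split => //; rewrite mulrC.
Qed.

Definition yv (j : nat) : 'Z_j.+2 := (2 ^ (j.+2)`!)%:R.

Lemma natZ_mod j x y : x = y %[mod j.+2] -> (x%:R : 'Z_j.+2) = y%:R.
Proof. by move=> e; rewrite -(Zp_nat_mod (isT : (1 < j.+2)%N)) e Zp_nat_mod. Qed.

Lemma yvyv j : yv j * yv j = yv j.
Proof.
rewrite /yv -natrM -expnD; apply: natZ_mod.
by apply: pow2_mod => //; apply: fact_geq.
Qed.

Lemma yv_compat j i (H : (j.+2 %| i.+2)%N) : zr H (yv i) = yv j.
Proof.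
rewrite /yv zr_nat; apply: natZ_mod.
have le : (j.+2 <= i.+2)%N by apply: dvdn_leq.
have -> : ((i.+2)`! = (j.+2)`! + ((i.+2)`! - (j.+2)`!))%N.
  by rewrite subnKC // leq_fact.
apply: pow2_mod => //; first exact: fact_geq.
apply: dvdn_sub => //.
by rewrite -(bin_fact le) mulnCA dvdn_mulr.
Qed.

Definition liftf K (X : 'M['Z_K.+2]_2) (j : nat) : 'M['Z_j.+2]_2 :=
  (1 - yv j) *: map_mx (zred j.+2 K.+2) X + (yv j)%:M.

Lemma liftf_compat K X j i (H : (j.+2 %| i.+2)%N) :
  liftf K X j = map_mx (zred j.+2 i.+2) (liftf K X i).
Proof.
rewrite -[map_mx (zred _ _)]/(map_mx (zr H)).
rewrite map_mxD map_mxZ map_scalar_mx rmorphB rmorph1 /liftf -(@yv_compat j i H).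
congr ((1 - _) *: _ + _%:M); apply/matrixP => a b; rewrite !mxE.
exact: (esym (@zr_nat j i H (X a b : nat))).
Qed.

Lemma det_idem (R : comRingType) (y : R) (B : 'M[R]_2) : y * y = y ->
  \det ((1 - y) *: B + y%:M) = (1 - y) * \det B + y.
Proof.
move=> yy; rewrite !det2 !mxE /=.
have -> : forall a b c d : R, ((1 - y) * a + y) * ((1 - y) * d + y) - ((1 - y) * b + 0) * ((1 - y) * c + 0)
   = (1 - y) * (a * d - b * c) + y + (y * y - y) * (a * d - b * c - a - d + 1).
  by move=> a b c d; ring.
by rewrite yy subrr mul0r addr0.
Qed.

Lemma sq_dist (R : comRingType) (P Q : nat) :
  let w := if (Q <= P)%N then (P - Q)%N else (Q - P)%N in
  (P%:R - Q%:R : R) = w%:R \/ (P%:R - Q%:R : R) = - w%:R.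
Proof.
move=> w; rewrite /w; case: leqP => h.
  by left; rewrite natrB.
by right; rewrite natrB ?(ltnW h) // opprB.
Qed.

Lemma liftf_unit K X j : (2 %| K.+2)%N -> X \in unitmx -> liftf K X j \in unitmx.
Proof.
move=> evK uX.
rewrite unitmxE /liftf det_idem ?yvyv //.
set P := muln (X 0 0) (X 1 1).
set Q := muln (X 0 1) (X 1 0).
have dB : \det (map_mx (zred j.+2 K.+2) X) = P%:R - Q%:R.
  by rewrite det2 !mxE /zred /P /Q !natrM.
have dX : \det X = P%:R - Q%:R.
  by rewrite det2 /P /Q !natrM !natr_Zp.
set w := if (Q <= P)%N then (P - Q)%N else (Q - P)%N.
have ow : odd w.
  have uw : (w%:R : 'Z_K.+2) \is a GRing.unit.
    rewrite unitmxE dX in uX.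
    by case: (sq_dist 'Z_K.+2 P Q) => e; rewrite e ?unitrN in uX.
  rewrite unitZpE // in uw.
  by rewrite -coprime2n (coprime_dvdl evK uw).
have dd : \det (map_mx (zred j.+2 K.+2) X) * \det (map_mx (zred j.+2 K.+2) X) = (w * w)%:R.
  by rewrite dB; case: (sq_dist 'Z_j.+2 P Q) => ->; rewrite ?mulrNN natrM.
set E := (j.+2)`!.
set T := totient (2 ^ E).
have T0 : (0 < T)%N by rewrite totient_gt0 expn_gt0.
have cop : coprime (w * w) (2 ^ E) by rewrite coprime_pexpr ?fact_gt0 // coprimen2 oddM ow.
have eul := Euler_exp_totient cop.
have E1 : (1 < 2 ^ E)%N.
  by rewrite -{1}(expn0 2) ltn_exp2l // fact_gt0.
have e1 : ((w * w) ^ T = ((w * w) ^ T %/ 2 ^ E) * 2 ^ E + 1)%N.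
  by rewrite {1}(divn_eq ((w * w) ^ T) (2 ^ E)) eul modn_small.
apply: (@unit_idem _ _ _ (2 ^ E)%:R ((w * w) ^ T %/ 2 ^ E)%:R (2 * T).-1).
- exact: yvyv.
- by rewrite -/(yv j) mulrBl mul1r yvyv subrr.
- rewrite prednK ?muln_gt0 // exprM expr2 dd -natrX {1}e1.
  by rewrite natrD natrM.
Qed.

Lemma to_zr m n (H : (m.+2 %| n.+2)%N) (A : 'M['Z_n.+2]_2) :
  map_mx (zred m.+2 n.+2) A = map_mx (zr H) A.
Proof. by []. Qed.
Arguments to_zr {m n} H A.

Lemma lift_exists K (X : 'M['Z_K.+2]_2) : (2 %| K.+2)%N -> (K.+2 %| 2 ^ (K.+2)`!)%N ->
  X \in unitmx -> exists g : GL2hat, sval g K = X.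
Proof.
move=> evK dK uX.
exists (exist _ (liftf K X) (conj (fun j => @liftf_unit K X j evK uX) (fun m n H => @liftf_compat K X m n H))).
rewrite /= /liftf.
have -> : yv K = 0.
  by rewrite /yv -(Zp_nat_mod (isT : (1 < K.+2)%N)) (eqP dK).
rewrite subr0 scale1r raddf0 addr0.
by apply/matrixP => a b; rewrite !mxE /zred natr_Zp.
Qed.

Lemma map_invmx' (aR rR : comUnitRingType) (f : {rmorphism aR -> rR}) (A : 'M[aR]_2) :
  A \in unitmx -> map_mx f (invmx A) = invmx (map_mx f A).
Proof.
move=> uA.
have uAf : map_mx f A \in unitmx by rewrite unitmxE det_map_mx rmorph_unit // -unitmxE.
have e : map_mx f A *m map_mx f (invmx A) = 1%:M by rewrite -map_mxM mulmxV // map_mx1.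
by rewrite -[LHS]mul1mx -(mulVmx uAf) -mulmxA e mulmx1.
Qed.

Definition ghmul (g h : GL2hat) : GL2hat.
Proof.
exists (fun j => sval g j *m sval h j).
case: (svalP g) => ug cg; case: (svalP h) => uh ch.
split; first by move=> j; rewrite unitmx_mul ug uh.
by move=> m n H; rewrite (cg m n H) (ch m n H) !(to_zr H) map_mxM.
Defined.

Definition ghinv (g : GL2hat) : GL2hat.
Proof.
exists (fun j => invmx (sval g j)).
case: (svalP g) => ug cg.
split; first by move=> j; rewrite unitmx_inv ug.
move=> m n H; rewrite (cg m n H) !(to_zr H) map_invmx' //; exact: ug.
Defined.

Definition Dm {R : comUnitRingType} (d : R) : 'M[R]_2 :=
  \matrix_(a, b) (if a == b then (if a == 0 then 1 else d) else 0).

Lemma det_Dm (R : comUnitRingType) (d : R) : \det (Dm d) = d.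
Proof. by rewrite det2 !mxE /= mul1r mulr0 subr0. Qed.

Lemma Dm1 (R : comUnitRingType) : Dm (1 : R) = 1%:M.
Proof.
apply/matrixP => a b; rewrite !mxE.
by case: (a == b); rewrite ?mulr1n ?mulr0n //; case: (a == 0).
Qed.

Lemma map_Dm m n (H : (m.+2 %| n.+2)%N) (d : 'Z_n.+2) :
  map_mx (zr H) (Dm d) = Dm (zr H d).
Proof.
apply/matrixP => a b; rewrite !mxE.
by case: (a == b); rewrite ?rmorph0 //; case: (a == 0); rewrite ?rmorph1.
Qed.

Definition ghnorm (g : GL2hat) : GL2hat.
Proof.
exists (fun j => sval g j *m Dm (\det (sval g j))^-1).
case: (svalP g) => ug cg.
split.
  move=> j; rewrite unitmx_mul ug /= unitmxE det_Dm unitrV -unitmxE; exact: ug.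
move=> m n H; rewrite (cg m n H) !(to_zr H) map_mxM map_Dm.
by rewrite rmorphV ?det_map_mx // -unitmxE ug.
Defined.

Section Frame.
Variable K : nat.
Local Notation gT := {'GL_2['Z_K.+2]}.

Definition piG (g : GL2hat) : gT := insubd (1%g : gT) (sval g K).

Lemma piGE g : GLval (piG g) = sval g K.
Proof. by rewrite /piG insubdK //; case: (svalP g) => u _; exact: u. Qed.

Lemma piGE' g : FinRing.uval (piG g) = sval g K.
Proof. exact: piGE. Qed.

Lemma piG_mul a b : piG (ghmul a b) = (piG a * piG b)%g.
Proof. by apply: val_inj; rewrite /= ?piGE ?piGE'. Qed.

Lemma piG_inv a : piG (ghinv a) = (piG a)^-1%g.
Proof. by apply: val_inj; rewrite /= ?piGE ?piGE'. Qed.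

Local Open Scope group_scope.
Lemma index_lemma (G H : GL2hat -> Prop) (Gb Hb : {group gT}) (lf : gT -> GL2hat) :
  (forall g, G g -> piG g \in Gb) ->
  (forall u, u \in Gb -> G (lf u) /\ piG (lf u) = u) ->
  (forall g, H g <-> G g /\ piG g \in Hb) ->
  (forall r x, G r -> G x -> G (ghmul (ghinv r) x)) ->
  Hb \subset Gb ->
  has_index G H #|lcosets Hb Gb|.
Proof.
move=> GGb lfP HP Gcl sHG.
split; first by move=> h /HP [].
set L := lcosets Hb Gb.
have repL : forall i : 'I_#|L|, repr (enum_val i) \in enum_val i /\ enum_val i = repr (enum_val i) *: Hb.
  move=> i; have /lcosetsP [y yG ->] := enum_valP i.
  have ry : repr (y *: Hb) \in y *: Hb by apply: (@mem_repr _ _ y); apply: lcoset_refl.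
  by split => //; apply/esym/lcoset_eqP.
have repG : forall i : 'I_#|L|, repr (enum_val i) \in Gb.
  move=> i; have /lcosetsP [y yG e] := enum_valP i.
  have := (repL i).1; rewrite e => /lcosetP [a aH ->].
  by rewrite groupM // (subsetP sHG).
exists (fun i => lf (repr (enum_val i))).
split; first by move=> i; have [] := lfP _ (repG i).
move=> x Gx.
set X := piG x.
have XL : X *: Hb \in L by rewrite mem_lcosets mulGSid // GGb.
set i := enum_rank_in XL (X *: Hb).
have ei : enum_val i = X *: Hb by rewrite /i enum_rankK_in.
exists i; split.
  exists (ghmul (ghinv (lf (repr (enum_val i)))) x).
  have [Gr pr] := lfP _ (repG i).
  split.
    apply/HP; split; first exact: Gcl.
    rewrite piG_mul piG_inv pr.
    have := (repL i).1; rewrite ei => /lcosetP [a aH ->].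
    by rewrite invMg -mulgA -/X mulVg mulg1 groupV.
  move=> n /=.
  rewrite mulmxA mulmxV ?mul1mx //.
  by case: (svalP (lf (repr (enum_val i)))) => u _; exact: u.
move=> j [h [Hh hc]].
apply: enum_val_inj.
have [Gr pr] := lfP _ (repG j).
have Xe : X = (piG (lf (repr (enum_val j))) * piG h)%g.
  by apply: val_inj; rewrite /= ?piGE ?piGE' hc.
rewrite ei (repL j).2; apply/lcoset_eqP; rewrite -pr Xe.
by apply/lcosetP; exists (piG h) => //; case/HP: Hh.
Qed.

End Frame.

Lemma Z2cases (x : 'Z_2) : x = 0 \/ x = 1.
Proof. by case: x => [[|[|k]] //= Hk]; [left|right]; apply: val_inj. Qed.

Lemma Z4cases (x : 'Z_4) : [\/ x = 0, x = 1, x = 2%:R | x = 3%:R].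
Proof.
by case: x => [[|[|[|[|k]]]] //= Hk]; [apply: Or41|apply: Or42|apply: Or43|apply: Or44]; apply: val_inj.
Qed.

Lemma Z2facts (m00 m01 m10 m11 : 'Z_2) :
  m00 * m11 - m01 * m10 != 0 -> 1 - (m00 + m11) + (m00 * m11 - m01 * m10) != 0 ->
  [/\ m10 = 1, m00 + m11 = 1 & m00 * m11 - m01 * m10 = 1].
Proof.
move=> h1 h2.
have : (m00 * m11 - m01 * m10 != 0) ==> (1 - (m00 + m11) + (m00 * m11 - m01 * m10) != 0) ==>
  [&& m10 == 1, m00 + m11 == 1 & m00 * m11 - m01 * m10 == 1].
  by case: (Z2cases m00) => ->; case: (Z2cases m01) => ->; case: (Z2cases m10) => ->;
    case: (Z2cases m11) => ->.
by rewrite h1 h2 /= => /and3P [/eqP -> /eqP -> /eqP ->].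
Qed.

Lemma Z2norm (a b : 'Z_2) : a * a + a * b + b * b = 0 -> a = 0 /\ b = 0.
Proof.
move=> h; have : (a * a + a * b + b * b == 0) ==> (a == 0) && (b == 0).
  by case: (Z2cases a) => ->; case: (Z2cases b) => ->.
by rewrite h eqxx /= => /andP [/eqP -> /eqP ->].
Qed.

Lemma Z4sq (l : 'Z_4) : l * l != 3%:R.
Proof. by case: (Z4cases l) => ->. Qed.

Lemma Z4choose (t q : 'Z_4) : zr (isT : (2 %| 4)%N) t = 1 -> zr (isT : (2 %| 4)%N) q = 1 ->
  exists2 a : nat, (a = 0 \/ a = 2)%N & (a%:R * a%:R + a%:R * t + q = 3%:R :> 'Z_4).
Proof.
case: (Z4cases t) => ->; case: (Z4cases q) => -> /eqP ht /eqP hq; move: ht hq => //= _ _.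
- by exists 2%N; [right|apply/eqP].
- by exists 0%N; [left|apply/eqP].
- by exists 2%N; [right|apply/eqP].
- by exists 0%N; [left|apply/eqP].
Qed.

Lemma ord2 (i : 'I_2) : i = 0 \/ i = 1.
Proof. by case: i => [[|[|k]] //= Hk]; [left|right]; apply: val_inj. Qed.

Lemma mul2 (R : comRingType) (A B : 'M[R]_2) i j :
  (A *m B) i j = A i 0 * B 0 j + A i 1 * B 1 j.
Proof.
rewrite !mxE !big_ord_recl big_ord0 addr0.
by congr (A _ _ * B _ _ + A _ _ * B _ _); apply: val_inj.
Qed.

Lemma tr2 (R : comRingType) (A : 'M[R]_2) : \tr A = A 0 0 + A 1 1.
Proof.
rewrite /mxtrace !big_ord_recl big_ord0 addr0.
by congr (A _ _ + A _ _); apply: val_inj.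
Qed.

Lemma normdet (R : comRingType) (a b : R) (A : 'M[R]_2) :
  \det (a%:M + b *: A) = a * a + a * b * (A 0 0 + A 1 1) + b * b * (A 0 0 * A 1 1 - A 0 1 * A 1 0).
Proof. rewrite det2 !mxE /=; ring. Qed.

Lemma CHmul (R : comRingType) (a b c d : R) (A : 'M[R]_2) :
  (a%:M + b *: A) *m (c%:M + d *: A) =
  (a * c - b * d * (A 0 0 * A 1 1 - A 0 1 * A 1 0))%:M + (a * d + b * c + b * d * (A 0 0 + A 1 1)) *: A.
Proof.
apply/matrixP => i j; rewrite mul2 !mxE.
by case: (ord2 i) => ->; case: (ord2 j) => -> /=; ring.
Qed.

Lemma Lz2 (z : int) : ((z%:~R : 'Z_2) == 0) = (2 %| z)%Z.
Proof.
rewrite dvdzE; case: z => [k|k].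
  rewrite /= -[_ == 0](inj_eq val_inj) /= val_Zp_nat //.
rewrite NegzE intrN oppr_eq0 abszN /= -[_ == 0](inj_eq val_inj) /= val_Zp_nat //.
Qed.

Lemma unit2 (n K : nat) (H : (0.+2 %| K.+2)%N) (x : 'Z_K.+2) :
  (0 < n)%N -> K.+2 = (2 ^ n)%N -> (x \is a GRing.unit) = (zr H x != 0).
Proof.
move=> n0 eK.
rewrite -(natr_Zp x) unitZpE // zr_nat.
move: (nat_of_ord x) => v.
rewrite eK coprime_pexpl // coprime2n.
rewrite -[_ == 0](inj_eq val_inj) /= val_Zp_nat // modn2.
by case: (odd _).
Qed.

Section Lev.
Variables (K : nat) (M : 'M[int]_2).
Local Notation gT := {'GL_2['Z_K.+2]}.
Definition Mb : 'M['Z_K.+2]_2 := map_mx (fun z : int => z%:~R) M.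

Definition Bset := [set u : gT | FinRing.uval u ord_max ord0 == 0].
Definition Cset := [set u : gT | [exists a : 'Z_K.+2, exists b : 'Z_K.+2,
   FinRing.uval u == a%:M + b *: Mb]].
Definition Sset := [set u : gT | \det (FinRing.uval u) == 1].

Lemma uvalM (x y : gT) : FinRing.uval (x * y)%g = FinRing.uval x *m FinRing.uval y.
Proof. by []. Qed.
Lemma uval1 : FinRing.uval (1%g : gT) = 1%:M.
Proof. by []. Qed.

Lemma om1 : (ord_max : 'I_2) = 1.
Proof. by apply: val_inj. Qed.

Lemma Bgs : group_set Bset.
Proof.
apply/group_setP; split; first by rewrite inE uval1 !mxE.
move=> x y; rewrite !inE uvalM !om1 mul2 => /eqP -> /eqP ->.
by rewrite mul0r mulr0 addr0.
Qed.

Lemma Cgs : group_set Cset.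
Proof.
apply/group_setP; split.
  rewrite inE uval1; apply/existsP; exists 1; apply/existsP; exists 0.
  by rewrite scale0r addr0.
move=> x y; rewrite !inE => /existsP [a /existsP [b /eqP xe]] /existsP [c /existsP [d /eqP ye]].
rewrite uvalM xe ye CHmul; apply/existsP; eexists; apply/existsP; eexists; exact: eqxx.
Qed.

Lemma Sgs : group_set Sset.
Proof.
apply/group_setP; split; first by rewrite inE uval1 det1.
by move=> x y; rewrite !inE uvalM det_mulmx => /eqP -> /eqP ->; rewrite mulr1.
Qed.

Definition Bg := Group Bgs.
Definition Cg := Group Cgs.
Definition Sg := Group Sgs.
End Lev.

Lemma Mfacts (M : 'M[int]_2) : two_inert M ->
  let m i j := ((M i j)%:~R : 'Z_2) in
  [/\ m 1 0 = 1, m 0 0 + m 1 1 = 1 & m 0 0 * m 1 1 - m 0 1 * m 1 0 = 1].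
Proof.
move=> tI m.
have h0 := tI 0; have h1 := tI 1.
rewrite -Lz2 det2 tr2 in h0; rewrite -Lz2 det2 tr2 in h1.
rewrite expr0n mulr0 sub0r /= in h0.
rewrite expr1n mulr1 in h0 h1.
rewrite !(intrD, intrM, intrN, intrB) in h0 h1.
rewrite ?oppr0 ?add0r in h0.
exact: Z2facts.
Qed.

Section Key.
Variables (K : nat) (M : 'M[int]_2) (n : nat).
Hypotheses (n0 : (0 < n)%N) (eK : K.+2 = (2 ^ n)%N) (tI : two_inert M).
Local Notation gT := {'GL_2['Z_K.+2]}.

Lemma H2 : (0.+2 %| K.+2)%N.
Proof. by rewrite eK -{1}(expn1 2) dvdn_exp2l. Qed.

Local Notation z2 := (zr H2 : {rmorphism 'Z_K.+2 -> 'Z_2}).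

Lemma zrMb i j : z2 (Mb K M i j) = (M i j)%:~R.
Proof. by rewrite mxE rmorph_int. Qed.

Lemma mkGE (X : 'M['Z_K.+2]_2) : X \in unitmx -> FinRing.uval (insubd (1%g : gT) X) = X.
Proof. by move=> u; rewrite insubdK. Qed.

Lemma BCfull : [set: gT] \subset (Bset K * Cset K M)%g.
Proof.
apply/subsetP => u _.
have [m10 t2 q2] := @Mfacts M tI.
set U := FinRing.uval u.
set a := U 1 1 * Mb K M 1 0 + U 1 0 * Mb K M 0 0.
set b := - U 1 0.
set C := a%:M + b *: Mb K M.
have uU : \det U \is a GRing.unit by rewrite -unitmxE; apply: GL_unitmx.
have uC : C \in unitmx.
  rewrite unitmxE normdet (@unit2 n K H2 _ n0 eK).
  rewrite !(rmorphD, rmorphM, rmorphN, rmorphB) !zrMb.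
  rewrite /= in m10 t2 q2.
  rewrite t2 q2 m10 !mulr1.
  apply/eqP => /Z2norm [ha hb].
  rewrite (@unit2 n K H2 _ n0 eK) det2 !(rmorphD, rmorphM, rmorphN, rmorphB) in uU.
  have r0 : z2 (U 1 0) = 0 by rewrite -[LHS]opprK hb oppr0.
  rewrite r0 mul0r addr0 in ha.
  by rewrite r0 ha !mulr0 subrr eqxx in uU.
set c := insubd (1%g : gT) C.
have cC : c \in Cset K M.
  rewrite inE mkGE //. apply/existsP. exists a. apply/existsP. by exists b.
have ucB : (u * c)%g \in Bset K.
  rewrite inE uvalM mkGE // om1 mul2 /C !mxE /=.
  apply/eqP; rewrite /b /a !mxE /= mulr1n mulr0n add0r. rewrite /U; ring.
rewrite -(mulgK c u).
apply: mem_mulg => //.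
by rewrite -[c^-1%g]/(c^-1%g : gT) (groupV (Cg K M)).
Qed.

Hypothesis n1 : (1 < n)%N.

Lemma H4 : (2.+2 %| K.+2)%N.
Proof. by rewrite eK -[4%N]/(2 ^ 2)%N dvdn_exp2l. Qed.

Local Notation z4 := (zr H4 : {rmorphism 'Z_K.+2 -> 'Z_4}).

Lemma zr_comp (x : 'Z_K.+2) : zr (isT : (2 %| 4)%N) (zr H4 x) = zr H2 x.
Proof. exact: (@zr_nat 0 2 isT (x : nat)). Qed.

Lemma notBC : exists2 h : gT, h \in Sset K &
  h \notin ((Cset K M :&: Sset K) * (Bset K :&: Sset K))%g.
Proof.
have [m10 t2 q2] := @Mfacts M tI.
rewrite /= in m10 t2 q2.
set T := Mb K M 0 0 + Mb K M 1 1.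
set Q := Mb K M 0 0 * Mb K M 1 1 - Mb K M 0 1 * Mb K M 1 0.
have t4 : zr (isT : (2 %| 4)%N) (zr H4 T) = 1.
  by rewrite zr_comp /T rmorphD !zrMb.
have q4 : zr (isT : (2 %| 4)%N) (zr H4 Q) = 1.
  by rewrite zr_comp /Q rmorphB !rmorphM !zrMb.
have [an _ e4] := Z4choose (zr H4 T) (zr H4 Q) t4 q4.
set a : 'Z_K.+2 := an%:R.
set x := a + Mb K M 0 0.
set y := Mb K M 1 0.
have uy : y \is a GRing.unit by rewrite (@unit2 n K H2 _ n0 eK) /y zrMb m10.
set Hm : 'M['Z_K.+2]_2 := \matrix_(i, j) (if i == 0 then (if j == 0 then x else - y^-1)
   else (if j == 0 then y else 0)).
have dH : \det Hm = 1.
  by rewrite det2 !mxE /= mulr0 sub0r mulNr opprK mulVr.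
have uH : Hm \in unitmx by rewrite unitmxE dH unitr1.
exists (insubd (1%g : gT) Hm); first by rewrite inE mkGE // dH.
apply/negP => /mulsgP [g b gin bin e].
move: gin bin; rewrite !inE => /andP [/existsP [a' /existsP [b' /eqP ge]] /eqP gdet] /andP [b10 _].
rewrite om1 in b10; move/eqP: b10 => b10.
have eH : Hm = FinRing.uval g *m FinRing.uval b.
  by have := congr1 FinRing.uval e; rewrite mkGE // uvalM.
have e0 : x = (a' + b' * Mb K M 0 0) * FinRing.uval b 0 0.
  have := congr1 (fun A : 'M__ => A 0 0) eH; rewrite /= mul2 b10 mulr0 addr0 ge !mxE /=.
  by rewrite mulr1n.
have e1 : y = (b' * y) * FinRing.uval b 0 0.
  have := congr1 (fun A : 'M__ => A 1 0) eH; rewrite /= mul2 b10 mulr0 addr0 ge !mxE /=.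
  by move=> E; rewrite mulr0n add0r in E; rewrite {1}E /y mxE.
set be : 'Z_K.+2 := FinRing.uval b 0 0.
have hb : b' * be = 1.
  apply: (mulrI uy); rewrite mulr1 {2}e1 -/be; ring.
have ha : a = a' * be.
  apply: (addIr (Mb K M 0 0)); rewrite -/x e0 -/be mulrDl [b' * _ * _]mulrAC hb mul1r //.
have gN : a' * a' + a' * b' * T + b' * b' * Q = 1.
  by rewrite -gdet ge normdet.
have key : a * a + a * T + Q = be * be.
  have -> : a * a + a * T + Q = be * be * (a' * a' + a' * b' * T + b' * b' * Q)
     + a' * be * T * (1 - b' * be) + Q * (1 - b' * be) * (1 + b' * be).
    rewrite ha; ring.
  by rewrite hb subrr !mulr0 mul0r !addr0 gN mulr1.
clearbody T Q.
have := congr1 z4 key.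
rewrite !rmorphD !rmorphM /a rmorph_nat => E.
move: (Z4sq (z4 be)); rewrite -E; move/eqP; apply; exact: e4.
Qed.

End Key.

Definition liftG K (X : 'M['Z_K.+2]_2) (evK : (2 %| K.+2)%N) (uX : X \in unitmx) : GL2hat :=
  exist _ (liftf K X) (conj (fun j => @liftf_unit K X j evK uX) (fun m n H => @liftf_compat K X m n H)).

Lemma liftG_K K (X : 'M['Z_K.+2]_2) evK uX : (K.+2 %| 2 ^ (K.+2)`!)%N ->
  sval (@liftG K X evK uX) K = X.
Proof.
move=> dK; rewrite /= /liftf.
have -> : yv K = 0.
  by rewrite /yv -(Zp_nat_mod (isT : (1 < K.+2)%N)) (eqP dK).
rewrite subr0 scale1r raddf0 addr0.
by apply/matrixP => a b; rewrite !mxE /zred natr_Zp.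
Qed.

Lemma SL2_norm g : SL2 (ghnorm g).
Proof.
move=> j; rewrite /= det_mulmx det_Dm divrr // -unitmxE.
by case: (svalP g) => u _; exact: u.
Qed.

Lemma ghnorm_K g K : \det (sval g K) = 1 -> sval (ghnorm g) K = sval g K.
Proof. by move=> d; rewrite /= d invr1 Dm1 mulmx1. Qed.

Lemma SL2_cl r x : SL2 r -> SL2 x -> SL2 (ghmul (ghinv r) x).
Proof. by move=> hr hx j; rewrite /= det_mulmx det_inv hr hx invr1 mulr1. Qed.

Theorem mainTheorem2 (n : nat) (M : 'M[int]_2) :
  (1 <= n)%N ->
  imag_quadratic_order_emb M -> optimal_emb M -> two_inert M ->
  let N := (2 ^ n)%N in
  (exists a b c : nat,
     has_index GL2 (cap (B0 N) (Cns N M)) a /\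
     has_index GL2 (B0 N) b /\
     has_index GL2 (Cns N M) c /\
     a = (b * c)%N) /\
  ((1 < n)%N ->
   exists a b c : nat,
     has_index SL2 (cap (cap (B0 N) (Cns N M)) SL2) a /\
     has_index SL2 (cap (B0 N) SL2) b /\
     has_index SL2 (cap (Cns N M) SL2) c /\
     a <> (b * c)%N).
Proof.
move=> n0 _ _ tI N.
set K := N.-2.
have N2 : (1 < N)%N by rewrite /N -{1}(expn0 2) ltn_exp2l.
have eK : K.+2 = (2 ^ n)%N by rewrite /K -/N; lia.
have evK : (2 %| K.+2)%N := @H2 K n n0 eK.
have dK : (K.+2 %| 2 ^ (K.+2)`!)%N.
  rewrite {1}eK dvdn_exp2l //; apply: leq_trans (fact_geq _).
  by rewrite eK ltnW // ltn_expl.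
pose gT := {'GL_2['Z_K.+2]}.
pose lf1 (u : gT) := @liftG K (FinRing.uval u) evK (GL_unitmx u).
have lf1P : forall u : gT, piG K (lf1 u) = u.
  by move=> u; apply: val_inj; rewrite /= ?piGE ?piGE' liftG_K.
have Bi : forall g, B0 N g <-> piG K g \in Bset K.
  by move=> g; rewrite inE piGE'; split => [->|/eqP].
have Ci : forall g, Cns N M g <-> piG K g \in Cset K M.
  move=> g; rewrite inE piGE'; split.
    by case=> a [b e]; apply/existsP; exists a; apply/existsP; exists b; apply/eqP; exact: e.
  by case/existsP => a /existsP [b /eqP e]; exists a, b.
split.
  exists #|lcosets (Bg K :&: Cg K M)%G [set: gT]%G|, #|lcosets (Bg K) [set: gT]%G|,
    #|lcosets (Cg K M) [set: gT]%G|.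
  split; [|split; [|split]].
  - apply: (@index_lemma K _ _ [set: gT]%G (Bg K :&: Cg K M)%G lf1).
    + by move=> g _; rewrite inE.
    + by move=> u _; split.
    + move=> g; rewrite in_setI; split.
        by case=> /Bi -> /Ci ->.
      by case=> _ /andP [/Bi hb /Ci hc].
    + by [].
    + by rewrite subsetT.
  - apply: (@index_lemma K _ _ [set: gT]%G (Bg K) lf1).
    + by move=> g _; rewrite inE.
    + by move=> u _; split.
    + by move=> g; split; [move/Bi|case=> _ /Bi].
    + by [].
    + by rewrite subsetT.
  - apply: (@index_lemma K _ _ [set: gT]%G (Cg K M) lf1).
    + by move=> g _; rewrite inE.
    + by move=> u _; split.
    + by move=> g; split; [move/Ci|case=> _ /Ci].
    + by [].
    + by rewrite subsetT.
  - apply: idx_eq; rewrite ?subsetT //.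
    exact: (@BCfull K M n n0 eK tI).
move=> n1.
pose lf2 (u : gT) := ghnorm (lf1 u).
have lf2P : forall u : gT, u \in Sg K -> SL2 (lf2 u) /\ piG K (lf2 u) = u.
  move=> u; rewrite inE => /eqP du; split; first exact: SL2_norm.
  have h : sval (lf1 u) K = FinRing.uval u := @liftG_K K _ evK (GL_unitmx u) dK.
  apply: val_inj; rewrite /= ?piGE ?piGE' /lf2 ghnorm_K h //.
have Si : forall g, SL2 g -> piG K g \in Sg K.
  by move=> g hg; rewrite inE ?piGE ?piGE'; apply/eqP; exact: hg.
exists #|lcosets ((Bg K :&: Cg K M) :&: Sg K)%G (Sg K)|, #|lcosets (Bg K :&: Sg K)%G (Sg K)|,
  #|lcosets (Cg K M :&: Sg K)%G (Sg K)|.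
split; [|split; [|split]].
- apply: (@index_lemma K _ _ (Sg K) ((Bg K :&: Cg K M) :&: Sg K)%G lf2) => //.
  + move=> g; rewrite !in_setI; split.
      by case=> [[/Bi -> /Ci ->] hs]; split => //; rewrite Si.
    by case=> hs /andP [/andP [/Bi hb /Ci hc] _].
  + exact: SL2_cl.
  + exact: subsetIr.
- apply: (@index_lemma K _ _ (Sg K) (Bg K :&: Sg K)%G lf2) => //.
  + move=> g; rewrite !in_setI; split.
      by case=> [/Bi -> hs]; split => //; rewrite Si.
    by case=> hs /andP [/Bi hb _].
  + exact: SL2_cl.
  + exact: subsetIr.
- apply: (@index_lemma K _ _ (Sg K) (Cg K M :&: Sg K)%G lf2) => //.
  + move=> g; rewrite !in_setI; split.
      by case=> [/Ci -> hs]; split => //; rewrite Si.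
    by case=> hs /andP [/Ci hc _].
  + exact: SL2_cl.
  + exact: subsetIr.
- have eI : (((Bg K :&: Cg K M) :&: Sg K)%G : {set gT}) = (Bg K :&: Sg K)%G :&: (Cg K M :&: Sg K)%G.
    by rewrite /= setIACA setIid.
  rewrite eI.
  case: (@notBC K M n n0 eK tI n1) => h hS hn.
  apply: (@idx_neq gT (Sg K) (Bg K :&: Sg K)%G (Cg K M :&: Sg K)%G h); rewrite ?subsetIr //.
Qed.
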